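(* Let $f_0(1)=f_0(2)=1$ and $f_0(n)=0$ for $n\ge3$. Then for every $m\ge1$ and $1\le k\le n$, $c_m(n,k)$ equals the number of words of length $n-1$ over the alphabet $\{0,1,\ldots,m\}$ which have exactly $k-1$ letters equal to $m$ and in which all zeros are isolated (no two zeros are adjacent). Also, $c_1(n,k)=\binom{k}{n-k}$ for $1\le k\le n$, and for $m>1$ and $\lceil n/2\rceil\ge k\ge1$, \[c_m(n,k)=\sum_{j=\lceil\frac{n}{2}\rceil-k}^{n-k}(m-1)^{j}\binom{j+k-1}{k-1}\binom{j+k}{n-j-k}.\]
   Context: For $m\ge 1$, $f_m$ is the invert transform of $f_{m-1}$, i.e. $f_m(n)=f_{m-1}(n)+\sum_{i=1}^{n-1}f_{m-1}(i)f_m(n-i)$ for $n\ge1$. For $m\ge1$ the numbers $c_m(n,k)$, $0\le k\le n$, are defined by $c_m(0,0)=1$, $c_m(n,0)=0$ for $n\ge1$, and $c_m(n,k)=\sum_{i=1}^{n-k+1}f_{m-1}(i)\,c_m(n-i,k-1)$ for $1\le k\le n$. Words may be empty; $\binom{a}{b}=0$ when $b>a$ or $b<0$. *)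

(* Defs.v *)
From mathcomp Require Import all_boot.
Set Implicit Arguments. Unset Strict Implicit. Unset Printing Implicit Defensive.

Fixpoint isolated_zeros (s : seq nat) : bool :=
  match s with
  | x :: ((y :: _) as t) => ~~ ((x == 0) && (y == 0)) && isolated_zeros t
  | _ => true
  end.

Definition words_count (m len r : nat) : nat :=
  #|[set w : len.-tuple 'I_m.+1 |
       (count (fun x : 'I_m.+1 => val x == m) w == r)
       && isolated_zeros (map val w)]|.

(* Main.v *)
Require Import Defs.
From mathcomp Require Import all_boot all_algebra.
From mathcomp Require Import ring zify.
Set Implicit Arguments. Unset Strict Implicit.
Definition Pw m r (s : seq nat) : bool := (count (pred1 m) s == r) && isolated_zeros s.
Definition Wq m L (P : seq nat -> bool) : nat := \sum_(t : L.-tuple 'I_m.+1) P (map val t).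

Lemma words_countE m L r : words_count m L r = Wq m L (Pw m r).
Proof.
rewrite /words_count /Wq -sum1_card big_mkcond /=; apply: eq_bigr => t _.
rewrite inE /Pw count_map.
by case: ifP.
Qed.

Lemma Wq_ext m L P P' : (forall s, P s = P' s) -> Wq m L P = Wq m L P'.
Proof. by move=> h; apply: eq_bigr => t _; rewrite h. Qed.

Lemma Wq0 m P : Wq m 0 P = P [::].
Proof.
rewrite /Wq (eq_bigr (fun _ => P [::] : nat)); last by move=> t _; rewrite tuple0.
by rewrite sum_nat_const card_tuple expn0 mul1n.
Qed.

Lemma Wq_cons m L P : Wq m L.+1 P = \sum_(v < m.+1) Wq m L (fun s => P (val v :: s)).
Proof.
rewrite /Wq pair_big /=.
rewrite (reindex (fun p : 'I_m.+1 * L.-tuple 'I_m.+1 => [tuple of p.1 :: p.2])) /=.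
  by apply: eq_bigr => p _.
exists (fun t : L.+1.-tuple 'I_m.+1 => (thead t, [tuple of behead t])).
  by move=> [x t] _ /=; rewrite theadE; congr pair; apply: val_inj.
by move=> t _; rewrite [in RHS](tuple_eta t); apply: val_inj.
Qed.

Lemma sum_split (F : nat -> nat) m' :
  \sum_(v < m'.+2) F v = F 0 + \sum_(i < m') F i.+1 + F m'.+1.
Proof. by rewrite big_ord_recl big_ord_recr /= addnA. Qed.

Lemma iso_cons v s : isolated_zeros (v :: s) =
  (if s is y :: _ then ~~ ((v == 0) && (y == 0)) else true) && isolated_zeros s.
Proof. by case: s. Qed.

Section Words.
Variable m' : nat.
Local Notation m := m'.+1.
Definition W L r := Wq m L (Pw m r).
Definition Z L r := Wq m L (fun s => Pw m r (0 :: s)).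
Definition V n k := if n is n'.+1 then (if k is k'.+1 then W n' k' else 0) else nat_of_bool (k == 0).

Lemma Pw_mid i s r : i < m' -> Pw m r (i.+1 :: s) = Pw m r s.
Proof.
move=> hi; rewrite /Pw iso_cons /=.
have -> : (i.+1 == m) = false by apply/negbTE; rewrite eqSS; lia.
by case: s.
Qed.

Lemma Pw_last s r : Pw m r (m :: s) = if r is r'.+1 then Pw m r' s else false.
Proof.
rewrite /Pw iso_cons /= eqxx.
have -> : (if s is y :: _ then true else true) = true by case: s.
by case: r.
Qed.

Lemma Wrec L r : W L.+1 r = Z L r + m' * W L r + V L.+1 r.
Proof.
rewrite /W Wq_cons (sum_split (fun v => Wq m L (fun s => Pw m r (v :: s)))).
congr (_ + _ + _).
  rewrite (eq_bigr (fun _ => Wq m L (Pw m r))); last first.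
    by move=> i _; apply: Wq_ext => s; rewrite Pw_mid.
  by rewrite sum_nat_const card_ord.
rewrite /V /W; case: r => [|r].
  by rewrite /Wq big1 // => t _; rewrite Pw_last.
by apply: Wq_ext => s; rewrite Pw_last.
Qed.

Lemma Zrec L r : Z L r = m' * V L r.+1 + V L r.
Proof.
case: L => [|L].
  rewrite /Z Wq0 /V /= muln0 add0n /Pw /=.
  by case: r.
rewrite /Z Wq_cons (sum_split (fun v => Wq m L (fun s => Pw m r (0 :: v :: s)))).
rewrite {1}/Wq big1 ?add0n; last by move=> t _; rewrite /Pw /= andbF.
congr (_ + _).
  rewrite (eq_bigr (fun _ => Wq m L (Pw m r))); last first.
    move=> i _; apply: Wq_ext => s.
    rewrite /Pw /=.
    have -> : (i.+1 == m) = false by apply/negbTE; rewrite eqSS; case: i => i /=; lia.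
    by case: s.
  by rewrite big_const_ord iter_addn_0 mulnC.
rewrite /V /W; case: r => [|r].
  by rewrite /Wq big1 // => t _; rewrite /Pw /= eqxx.
apply: Wq_ext => s; rewrite /Pw /= eqxx. by rewrite add0n add1n eqSS; case: s.
Qed.

Lemma Vrec n k : V n.+1 k.+1 = m' * (V n k.+1 + (if n is n'.+1 then V n' k.+1 else 0))
   + (V n k + (if n is n'.+1 then V n' k else 0)).
Proof.
case: n => [|n].
  rewrite /V /W Wq0 /Pw /= muln0 add0n addn0.
  by case: k.
rewrite [LHS]/V Wrec Zrec.
have -> : W n k = V n.+1 k.+1 by [].
lia.
Qed.

End Words.


Import GRing.Theory Num.Theory.
Local Open Scope ring_scope.

Definition eqm (N : nat) (p q : {poly int}) := forall n, (n <= N)%N -> p`_n = q`_n.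

Lemma eqm_refl N p : eqm N p p. Proof. by []. Qed.
Lemma eqm_sym N p q : eqm N p q -> eqm N q p.
Proof. by move=> h n hn; rewrite h. Qed.
Lemma eqm_trans N p q r : eqm N p q -> eqm N q r -> eqm N p r.
Proof. by move=> h1 h2 n hn; rewrite h1 // h2. Qed.
Lemma eqmD N p q p' q' : eqm N p q -> eqm N p' q' -> eqm N (p + p') (q + q').
Proof. by move=> h1 h2 n hn; rewrite !coefD h1 // h2. Qed.
Lemma eqmB N p q p' q' : eqm N p q -> eqm N p' q' -> eqm N (p - p') (q - q').
Proof. by move=> h1 h2 n hn; rewrite !coefB h1 // h2. Qed.
Lemma eqmMl N r p q : eqm N p q -> eqm N (r * p) (r * q).
Proof.
move=> h n hn; rewrite !coefM; apply: eq_bigr => i _; rewrite h //.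
exact: leq_trans (leq_subr _ _) hn.
Qed.
Lemma eqmM N p q p' q' : eqm N p q -> eqm N p' q' -> eqm N (p * p') (q * q').
Proof.
move=> h1 h2; apply: (@eqm_trans _ _ (p * q')); first exact: eqmMl.
rewrite (mulrC p) (mulrC q); exact: eqmMl.
Qed.

Definition vanish (a : nat) (p : {poly int}) := forall n, (n < a)%N -> p`_n = 0.

Lemma vanishM a b p q : vanish a p -> vanish b q -> vanish (a + b) (p * q).
Proof.
move=> hp hq n hn; rewrite coefM big1 // => [[j hj]] _ /=.
case: (ltnP j a) => ja; first by rewrite hp // mul0r.
rewrite hq ?mulr0 //; lia.
Qed.

Lemma vanish_eqm0 N p : vanish N.+1 p -> eqm N p 0.
Proof. by move=> h n hn; rewrite coef0 h. Qed.

Definition G : {poly int} := 'X + 'X^2.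

Lemma vanishG : vanish 1 G.
Proof. by case=> // _; rewrite /G coefD coefX coefXn. Qed.

Lemma vanishGX a : vanish a (G ^+ a).
Proof.
elim: a => [|a IH]; first by [].
rewrite exprS; have := vanishM vanishG IH; by rewrite add1n.
Qed.

Lemma vanishGXM a p : vanish a (G ^+ a * p).
Proof. have h0 : vanish 0 p by []. by have := vanishM (@vanishGX a) h0; rewrite addn0. Qed.

Lemma coef1X a i : ((1 + 'X : {poly int}) ^+ a)`_i = ('C(a, i))%:R.
Proof.
elim: a i => [|a IH] i; first by rewrite expr0 coef1 bin0n.
rewrite exprS mulrDl mul1r coefD coefXM IH.
case: i => [|i] /=; first by rewrite addr0 !bin0.
by rewrite IH binS natrD addrC.
Qed.

Lemma coefGX a n : (G ^+ a)`_n = if (a <= n)%N then ('C(a, n - a))%:R else 0.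
Proof.
have -> : G ^+ a = 'X^a * (1 + 'X) ^+ a by rewrite -exprMn /G; congr (_ ^+ _); ring.
rewrite coefXnM coef1X; case: ltnP => //.
Qed.

Lemma eqm_cancel N (u p q : {poly int}) : u`_0 = 1 -> eqm N (u * p) (u * q) -> eqm N p q.
Proof.
move=> u0 h.
suff: forall n, (n <= N)%N -> (p - q)`_n = 0.
  by move=> h' n hn; have := h' n hn; rewrite coefB => /eqP; rewrite subr_eq0 => /eqP.
elim/ltn_ind => n IH hn.
have := h n hn; move/eqP; rewrite -subr_eq0 -coefB -mulrBr coefM big_ord_recl /=.
rewrite u0 mul1r subn0 big1 ?addr0; first by move/eqP.
move=> [j hj] _ /=; rewrite IH ?mulr0 //; rewrite /bump /=; lia.
Qed.

Definition Q (A : int) (N k : nat) : {poly int} :=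
  \sum_(j < N) (A ^+ j * ('C(j + k, k))%:R)%:P * G ^+ (j + k).+1.
Definition U (A : int) : {poly int} := 1 - A%:P * G.
Lemma U0 A : (U A)`_0 = 1.
Proof. by rewrite /U coefB coef1 coefCM vanishG // mulr0 subr0. Qed.

Lemma key0 A N : eqm N (U A * Q A N 0) G.
Proof.
case: N => [|N].
  by rewrite /Q big_ord0 mulr0 => n; rewrite leqn0 => /eqP ->; rewrite coef0 vanishG.
have E : U A * Q A N.+1 0 = G - G ^+ (N.+2) * (A ^+ N.+1)%:P.
  rewrite /U /Q mulrBl mul1r mulr_sumr.
  rewrite big_ord_recl [X in _ - X]big_ord_recr /=.
  have -> : \sum_(i < N) (A ^+ (bump 0 i) * ('C(bump 0 i + 0, 0))%:R)%:P * G ^+ (bump 0 i + 0).+1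
     = \sum_(i < N) A%:P * G * ((A ^+ i * ('C(i + 0, 0))%:R)%:P * G ^+ (i + 0).+1).
    apply: eq_bigr => i _; rewrite /bump /= !addn0 !bin0 !mulr1 add1n exprS polyCM (exprS G).
    ring.
  rewrite !addn0 !bin0 !mulr1 expr0 mul1r expr1 (exprS G (N.+1)) (exprS A) polyCM.
  ring.
rewrite E => n hn; rewrite coefB (vanishGXM _ (n:=n)) ?subr0 //; lia.
Qed.

Lemma keyS A N k : eqm N (U A * Q A N k.+1) (G * Q A N k).
Proof.
case: N => [|N]; first by rewrite /Q !big_ord0 !mulr0.
have E : U A * Q A N.+1 k.+1 = G * Q A N.+1 k - G ^+ (N + k).+3 * (A ^+ N.+1 * ('C(N + k.+1, k.+1))%:R)%:P.
  rewrite /U /Q mulrBl mul1r !mulr_sumr.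
  rewrite big_ord_recl [X in _ - X]big_ord_recr /= [in RHS]big_ord_recl /=.
  set S1 := \sum_(i < N) _. set S2 := \sum_(i < N) _. set S3 := \sum_(i < N) _.
  have -> : S1 = S2 + S3.
    rewrite /S1 /S2 /S3 -big_split; apply: eq_bigr => i _ /=.
    rewrite /bump /= add1n !addSn !addnS binS natrD.
    rewrite !exprS; rewrite ?polyCM ?rmorphD /= ?polyCM; ring.
  rewrite !add0n !binn expr0 mul1r addnS !exprS; rewrite ?polyCM ?polyC1 /=; ring.
rewrite E => n hn; rewrite coefB (vanishGXM _ (n:=n)) ?subr0 //; lia.
Qed.

Lemma vanishX p k : vanish 1 p -> vanish k (p ^+ k).
Proof.
move=> h; elim: k => [|k IH]; first by [].
rewrite exprS; have := vanishM h IH; by rewrite add1n.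
Qed.

Lemma vanishQ A N k : vanish k.+1 (Q A N k).
Proof.
move=> n hn; rewrite /Q coef_sum big1 // => j _.
rewrite coefCM coefGX; case: ifP => h; last by rewrite mulr0.
lia.
Qed.

Lemma powQ A N k : eqm N ((Q A N 0) ^+ k.+1) (Q A N k).
Proof.
elim: k => [|k IH]; first by rewrite expr1.
rewrite exprS; apply: eqm_trans (eqmMl _ IH) _.
apply: (eqm_cancel (U0 A)).
apply: (@eqm_trans _ _ (G * Q A N k)); last exact/eqm_sym/keyS.
rewrite mulrA; apply: eqmM; [exact: key0 | exact: eqm_refl].
Qed.

Lemma Qrec (M : nat) N : eqm N (Q M.+1%:R N 0) (Q M%:R N 0 + Q M%:R N 0 * Q M.+1%:R N 0).
Proof.
apply: (@eqm_cancel _ (U M%:R * U M.+1%:R)).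
  by rewrite coef0M !U0 mulr1.
have h1 := @key0 M%:R N. have h2 := @key0 M.+1%:R N.
apply: (@eqm_trans _ _ (U M%:R * G)).
  rewrite -mulrA; exact: eqmMl.
apply: (@eqm_trans _ _ (U M.+1%:R * G + G * G)).
  have -> : U M.+1%:R * G + G * G = U M%:R * G by rewrite /U -natr1 rmorphD /= polyC1; ring.
  exact: eqm_refl.
apply/eqm_sym; rewrite mulrDr.
apply: eqmD.
  rewrite (mulrC (U M%:R)) -mulrA; exact: eqmMl.
have -> : U M%:R * U M.+1%:R * (Q M%:R N 0 * Q M.+1%:R N 0) =
          (U M%:R * Q M%:R N 0) * (U M.+1%:R * Q M.+1%:R N 0) by ring.
exact: eqmM.
Qed.

Lemma coefQ A N k n : (k < n)%N -> (n <= N)%N -> (Q A N k)`_n =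
  \sum_(0 <= j < (n - k.+1).+1) A ^+ j * ('C(j + k, k))%:R * ('C(j + k.+1, n - j - k.+1))%:R.
Proof.
move=> hk hn; rewrite /Q coef_sum.
rewrite (eq_bigr (fun j : 'I_N => A ^+ j * ('C(j + k, k))%:R *
     (if (j + k.+1 <= n)%N then ('C(j + k.+1, n - (j + k.+1)))%:R else 0))); last first.
  by move=> j _; rewrite coefCM coefGX addnS.
rewrite -(big_mkord xpredT (fun j => A ^+ j * ('C(j + k, k))%:R *
     (if (j + k.+1 <= n)%N then ('C(j + k.+1, n - (j + k.+1)))%:R else 0))).
rewrite (big_cat_nat _ (n := (n - k.+1).+1)) //=; last by lia.
rewrite [X in _ + X]big_nat_cond [X in _ + X]big1 ?addr0; last first.
  move=> j /andP [/andP [h1 h2] _]; case: ifP => h; last by rewrite mulr0.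
  lia.
apply: eq_big_nat => j /andP [_ hj].
have -> : (j + k.+1 <= n)%N by lia.
by rewrite subnDA.
Qed.


Lemma coefG (p : {poly int}) n : (G * p)`_n.+1 = p`_n + (if n is n'.+1 then p`_n' else 0).
Proof.
rewrite /G mulrDl coefD coefXM coefXnM /=.
by case: n => [|n] //=; rewrite !subSS subn0.
Qed.

Lemma Drec A N k n : (n.+1 <= N)%N ->
  ((Q A N 0) ^+ k.+1)`_n.+1 =
    A * (((Q A N 0) ^+ k.+1)`_n + (if n is n'.+1 then ((Q A N 0) ^+ k.+1)`_n' else 0))
    + (((Q A N 0) ^+ k)`_n + (if n is n'.+1 then ((Q A N 0) ^+ k)`_n' else 0)).
Proof.
move=> hn.
have h : eqm N (U A * (Q A N 0) ^+ k.+1) (G * (Q A N 0) ^+ k).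
  rewrite exprS mulrA; apply: eqmM; [exact: key0 | exact: eqm_refl].
have := h n.+1 hn; rewrite /U mulrBl mul1r coefB -mulrA coefCM !coefG => E.
by rewrite -E addrC subrK.
Qed.

Lemma DV m' N n k : (n <= N)%N -> ((Q m'%:R N 0) ^+ k)`_n = (V m' n k)%:R.
Proof.
elim/ltn_ind: n k => n IH k hn.
case: n IH hn => [|n] IH hn.
  case: k => [|k]; first by rewrite expr0 coef1.
  by rewrite (@vanishX _ k.+1 (@vanishQ _ _ 0) 0).
case: k => [|k]; first by rewrite expr0 coef1.
rewrite Drec // Vrec natrD natrM !natrD.
rewrite !IH //; try lia.
case: n IH hn => [|n] IH hn //.
rewrite !IH //; lia.
Qed.
Local Close Scope ring_scope.

Section Main.
Variables (f : nat -> nat -> nat) (c : nat -> nat -> nat -> nat).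
Hypotheses (hf01 : f 0 1 = 1) (hf02 : f 0 2 = 1)
  (hf0 : forall n, 3 <= n -> f 0 n = 0)
  (hf : forall m n, 1 <= m -> 1 <= n ->
     f m n = f m.-1 n + \sum_(1 <= i < n) f m.-1 i * f m (n - i))
  (hc00 : forall m, 1 <= m -> c m 0 0 = 1)
  (hcn0 : forall m n, 1 <= m -> 1 <= n -> c m n 0 = 0)
  (hc : forall m n k, 1 <= m -> 1 <= k -> k <= n ->
     c m n k = \sum_(1 <= i < (n - k + 1).+1) f m.-1 i * c m (n - i) k.-1).
Local Open Scope ring_scope.

Lemma f_coef M N i : (1 <= i)%N -> (i <= N)%N -> (f M i)%:R = (Q M%:R N 0)`_i :> int.
Proof.
elim: M i => [|M IH] i.
  move=> h1 h2.
  have hU : U 0%:R = 1 by rewrite /U mulr0n polyC0 mul0r subr0.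
  have := @key0 0%:R N i h2; rewrite hU mul1r => ->.
  rewrite /G coefD coefX coefXn.
  case: i h1 {h2} => [|[|[|i]]] //= _; first by rewrite hf01.
    by rewrite hf02.
  by rewrite hf0.
elim/ltn_ind: i => i IHi h1 h2.
rewrite hf //= natrD natr_sum (Qrec M h2) coefD coefM (IH i h1 h2).
congr (_ + _)%R.
rewrite big_ord_recl (@vanishQ _ _ 0 0) // GRing.mul0r GRing.add0r.
case: i IHi h1 h2 => [|i] // IHi _ h2.
rewrite big_ord_recr /= subnn (@vanishQ _ _ 0 0) // GRing.mulr0 GRing.addr0.
rewrite big_add1 /= big_mkord; apply: eq_bigr => j _.
rewrite /bump /= add1n natrM (IH j.+1) //; last by case: j => j hj /=; lia.
rewrite (IHi (i.+1 - j.+1)%N) //; case: j => j hj /=; lia.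
Qed.

Lemma c_coef m N k n : (1 <= m)%N -> (n <= N)%N -> (k <= n)%N || (k == 0%N) ->
  (c m n k)%:R = ((Q m.-1%:R N 0) ^+ k)`_n :> int.
Proof.
move=> hm; elim: k n => [|k IH] n hN hk.
  rewrite expr0 coef1; case: n {hN hk} => [|n]; [by rewrite hc00 | by rewrite hcn0].
have hkn : (k < n)%N by move: hk; rewrite orbF.
rewrite hc //= (_ : (n - k.+1 + 1 = n - k)%N); last by lia.
rewrite natr_sum exprS coefM.
rewrite -(big_mkord xpredT (fun j => (Q m.-1%:R N 0)`_j * (Q m.-1%:R N 0 ^+ k)`_(n - j))).
have hs1 : ((n - k).+1 <= n.+1)%N by lia.
have hs2 : (0 < (n - k).+1)%N by lia.
rewrite [RHS](big_cat_nat _ (n := (n - k).+1)) //=.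
rewrite [X in _ = X + _]big_ltn //.
rewrite (@vanishQ _ _ 0 0) // GRing.mul0r GRing.add0r.
rewrite [X in _ = _ + X]big_nat_cond [X in _ = _ + X]big1 ?GRing.addr0; last first.
  move=> j /andP [/andP [h1 h2] _].
  rewrite (@vanishX _ k (@vanishQ _ _ 0) (n - j)%N) ?GRing.mulr0 //; lia.
apply: eq_big_nat => i /andP [h1 h2].
rewrite natrM (@f_coef m.-1 N i h1); last by lia.
rewrite IH //; [lia | apply/orP; left; lia].
Qed.

Lemma claim1 m n k : (1 <= m)%N -> (1 <= k)%N -> (k <= n)%N ->
  c m n k = words_count m n.-1 k.-1.
Proof.
move=> hm hk hkn; apply/eqP; rewrite -(eqr_nat int); apply/eqP.
rewrite (@c_coef m n k n) //; last by rewrite hkn.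
case: m hm => [|m'] // _.
case: k hk hkn => [|k] // _ hkn.
case: n hkn => [|n] // hkn.
by rewrite DV //= words_countE.
Qed.

Lemma c_closed m n k : (1 <= m)%N -> (1 <= k)%N -> (k <= n)%N ->
  c m n k = (\sum_(0 <= j < (n - k).+1)
      (m - 1) ^ j * 'C(j + k - 1, k - 1) * 'C(j + k, n - j - k))%N.
Proof.
move=> hm hk hkn; apply/eqP; rewrite -(eqr_nat int); apply/eqP.
rewrite (@c_coef m n k n) //; last by rewrite hkn.
case: k hk hkn => [|k] // _ hkn.
rewrite powQ // coefQ // natr_sum; apply: eq_big_nat => j _.
have -> : (j + k.+1 - 1 = j + k)%N by lia.
have -> : (k.+1 - 1 = k)%N by lia.
by rewrite !natrM natrX subn1.
Qed.

Lemma claim2 n k : (1 <= k)%N -> (k <= n)%N -> c 1 n k = 'C(k, n - k).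
Proof.
move=> hk hkn; rewrite c_closed // big_ltn // big_nat_cond big1 ?addn0.
  by rewrite add0n expn0 mul1n binn mul1n subn0.
by move=> j /andP [/andP [h1 _] _]; rewrite subnn exp0n.
Qed.

Lemma claim3 m n k : (1 < m)%N -> (1 <= k)%N -> (k <= uphalf n)%N ->
  c m n k = (\sum_(uphalf n - k <= j < (n - k).+1)
                 (m - 1) ^ j * 'C(j + k - 1, k - 1) * 'C(j + k, n - j - k))%N.
Proof.
move=> hm hk hkn.
have hn : (k <= n)%N by move: hkn; rewrite uphalf_half; have := odd_double_half n; lia.
rewrite c_closed //; last by lia.
rewrite (big_cat_nat _ (n := uphalf n - k)) //=; last first.
  rewrite uphalf_half; have := odd_double_half n; lia.
rewrite big_nat_cond big1 ?add0n // => j /andP [/andP [_ h] _].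
rewrite (@bin_small (j + k) (n - j - k)) ?muln0 //.
move: h; rewrite uphalf_half; have := odd_double_half n; lia.
Qed.

Local Close Scope ring_scope.
Lemma main_sec :
  (forall m n k, 1 <= m -> 1 <= k -> k <= n ->
     c m n k = words_count m n.-1 k.-1)
  /\ (forall n k, 1 <= k -> k <= n -> c 1 n k = 'C(k, n - k))
  /\ (forall m n k, 1 < m -> 1 <= k -> k <= uphalf n ->
     c m n k = \sum_(uphalf n - k <= j < (n - k).+1)
                 (m - 1) ^ j * 'C(j + k - 1, k - 1) * 'C(j + k, n - j - k)).
Proof.
split; first exact: claim1.
split; first exact: claim2.
exact: claim3.
Qed.

End Main.

Theorem corollary20 (f : nat -> nat -> nat) (c : nat -> nat -> nat -> nat)
  (hf01 : f 0 1 = 1) (hf02 : f 0 2 = 1)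
  (hf0 : forall n, 3 <= n -> f 0 n = 0)
  (hf : forall m n, 1 <= m -> 1 <= n ->
     f m n = f m.-1 n + \sum_(1 <= i < n) f m.-1 i * f m (n - i))
  (hc00 : forall m, 1 <= m -> c m 0 0 = 1)
  (hcn0 : forall m n, 1 <= m -> 1 <= n -> c m n 0 = 0)
  (hc : forall m n k, 1 <= m -> 1 <= k -> k <= n ->
     c m n k = \sum_(1 <= i < (n - k + 1).+1) f m.-1 i * c m (n - i) k.-1) :
  (forall m n k, 1 <= m -> 1 <= k -> k <= n ->
     c m n k = words_count m n.-1 k.-1)
  /\ (forall n k, 1 <= k -> k <= n -> c 1 n k = 'C(k, n - k))
  /\ (forall m n k, 1 < m -> 1 <= k -> k <= uphalf n ->
     c m n k = \sum_(uphalf n - k <= j < (n - k).+1)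
                 (m - 1) ^ j * 'C(j + k - 1, k - 1) * 'C(j + k, n - j - k)).
Proof.
exact: (main_sec hf01 hf02 hf0 hf hc00 hcn0 hc).
Qed.
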